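(* Let $P, Q \subseteq \mathbb{R}^d$ be full-dimensional semi-rational polytopes and let $D \subseteq (0, \infty)$ be a dense subset such that $L_{P+w}(s) = L_{Q+w}(s)$ for all $w \in \mathbb{Z}^d$ and all $s \in D$. Then $P = Q$.
   Context: For a polytope $P \subseteq \mathbb{R}^d$ and real $s \ge 0$, $L_P(s) = \#(sP \cap \mathbb{Z}^d)$, where $sP = \{sx : x \in P\}$. A polytope is semi-rational if it can be written as $\bigcap_{i=1}^n \{x \in \mathbb{R}^d : \langle a_i, x\rangle \le b_i\}$ with all $a_i \in \mathbb{Z}^d$ and all $b_i \in \mathbb{R}$. *)

(* Defs.v *)
From Stdlib Require Import Reals List ZArith ClassicalEpsilon.
Import ListNotations.
Open Scope R_scope.

(* Points of R^d are represented by functions nat -> R, of which only the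
   coordinates 0 .. d-1 are relevant; subsets of R^d are predicates on them
   that only depend on those coordinates (guaranteed by the H-description). *)

Fixpoint sumR (n : nat) (f : nat -> R) : R :=
  match n with
  | O => 0
  | S m => sumR m f + f m
  end.

Definition dotZ (d : nat) (a : nat -> Z) (x : nat -> R) : R :=
  sumR d (fun k => IZR (a k) * x k).

(* A lattice point of Z^d is a list of d integers; its image in R^d. *)
Definition vecZ (z : list Z) : nat -> R := fun k => IZR (nth k z 0%Z).

Definition bounded (d : nat) (P : (nat -> R) -> Prop) : Prop :=
  exists M, forall x, P x -> forall k, (k < d)%nat -> Rabs (x k) <= M.

Definition semi_rational_polytope (d : nat) (P : (nat -> R) -> Prop) : Prop :=
  (exists (n : nat) (a : nat -> nat -> Z) (b : nat -> R),
      forall x, P x <-> (forall i, (i < n)%nat -> dotZ d (a i) x <= b i))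
  /\ bounded d P.

Definition full_dimensional (d : nat) (P : (nat -> R) -> Prop) : Prop :=
  exists x r, 0 < r /\
    forall y, (forall k, (k < d)%nat -> Rabs (y k - x k) < r) -> P y.

Definition dilate (d : nat) (s : R) (P : (nat -> R) -> Prop) : (nat -> R) -> Prop :=
  fun x => exists y, P y /\ forall k, (k < d)%nat -> x k = s * y k.

Definition translate (d : nat) (P : (nat -> R) -> Prop) (w : list Z) : (nat -> R) -> Prop :=
  fun x => exists y, P y /\ forall k, (k < d)%nat -> x k = y k + vecZ w k.

Definition lattice_card (d : nat) (P : (nat -> R) -> Prop) (s : R) (n : nat) : Prop :=
  exists l : list (list Z), length l = n /\ NoDup l /\
    forall z, In z l <-> (length z = d /\ dilate d s P (vecZ z)).

(* L_P(s) = #(sP ∩ Z^d)  (well defined for bounded P) *)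
Definition L (d : nat) (P : (nat -> R) -> Prop) (s : R) : nat :=
  epsilon (inhabits 0%nat) (fun n => lattice_card d P s n).

(* Main.v *)
Require Import Defs.
From Stdlib Require Import Reals List ZArith Lia Lra Classical ClassicalEpsilon.
Open Scope R_scope.

Lemma filt (T : list Z -> Prop) : forall l : list (list Z),
  exists l', NoDup l' /\ forall z, In z l' <-> In z l /\ T z.
Proof.
  induction l as [|a l IH].
  - exists nil; split; [constructor|]; simpl; tauto.
  - destruct IH as [l' [Hn Hi]].
    destruct (classic (T a /\ ~ In a l')) as [[Ta Na]|Hc].
    + exists (a :: l'); split; [constructor; auto|].
      intro z; simpl; rewrite Hi; split.
      * intros [Hz|Hz]; [subst; tauto|tauto].
      * intros [[Hz|Hz] Tz]; [left; auto|right; auto].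
    + exists l'; split; auto. intro z; simpl; rewrite Hi; split; [tauto|].
      intros [[Hz|Hz] Tz]; [|tauto]. rewrite <- Hz in Tz |- *.
      destruct (classic (In a l')) as [I|I]; [apply Hi; auto| exfalso; apply Hc; auto].
Qed.

Lemma zrange (K : Z) : exists r : list Z, forall t, (Z.abs t <= K)%Z -> In t r.
Proof.
  exists (map (fun i => Z.of_nat i - K)%Z (seq 0 (Z.to_nat (2*K+1)))).
  intros t Ht. apply in_map_iff. exists (Z.to_nat (t + K)). split.
  - lia.
  - apply in_seq. lia.
Qed.

Lemma box_cover (K : Z) : forall d, exists l : list (list Z),
  forall z, length z = d -> Forall (fun t => (Z.abs t <= K)%Z) z -> In z l.
Proof.
  destruct (zrange K) as [r Hr].
  induction d as [|d [l Hl]].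
  - exists (nil :: nil). intros z Hz _. destruct z; [left; auto| discriminate].
  - exists (flat_map (fun h => map (cons h) l) r).
    intros [|h t] Hz Hf; [discriminate|]. inversion Hf; subst.
    apply in_flat_map. exists h; split; auto.
    apply in_map. apply Hl; auto.
Qed.

Lemma fin_bounded (S : list Z -> Prop) d K :
  (forall z, S z -> length z = d /\ forall k, (k < d)%nat -> (Z.abs (nth k z 0%Z) <= K)%Z) ->
  exists l, NoDup l /\ forall z, In z l <-> S z.
Proof.
  intros HS. destruct (box_cover K d) as [l Hl].
  destruct (filt S l) as [l' [Hn Hi]]. exists l'; split; auto.
  intro z; rewrite Hi; split; [tauto|]. intro Sz; split; auto.
  destruct (HS z Sz) as [Hlen Hb]. apply Hl; auto.
  apply Forall_forall. intros t Ht. destruct (In_nth z t 0%Z Ht) as [k [Hk Hkt]].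
  rewrite <- Hkt. apply Hb. lia.
Qed.

Lemma absw (w : list Z) : forall k,
  (Z.abs (nth k w 0) <= fold_right (fun t acc => Z.abs t + acc) 0 w)%Z.
Proof.
  induction w as [|a w IH]; intros k; destruct k as [|k]; simpl; try lia.
  all: try (specialize (IH k); lia).
  specialize (IH 0%nat). lia.
Qed.

Lemma L_pos (d : nat) (P : (nat -> R) -> Prop) (s : R) (w z : list Z) : Defs.bounded d P -> 0 < s -> length z = d ->
  dilate d s (translate d P w) (vecZ z) -> L d (translate d P w) s <> 0%nat.
Proof.
  intros [M HM] spos Hz Hd.
  set (W := fold_right (fun t acc => Z.abs t + acc)%Z 0%Z w).
  set (B := s * (Rabs M + IZR W)).
  destruct (fin_bounded (fun z => length z = d /\ dilate d s (translate d P w) (vecZ z)) d (up B))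
    as [l [Hn Hi]].
  { intros z' [Hl [y [[p [Pp Hp]] Hy]]]. split; auto. intros k Hk.
    assert (Hlt: IZR (Z.abs (nth k z' 0%Z)) < IZR (up B)).
    { rewrite <- Rabs_Zabs. apply Rle_lt_trans with B; [|apply archimed].
      change (IZR (nth k z' 0%Z)) with (vecZ z' k). rewrite Hy, Hp by auto.
      rewrite Rabs_mult, (Rabs_pos_eq s) by lra. unfold B.
      apply Rmult_le_compat_l; [lra|].
      eapply Rle_trans; [apply Rabs_triang|]. apply Rplus_le_compat.
      - specialize (HM p Pp k Hk). pose proof (Rle_abs M). lra.
      - unfold vecZ. rewrite Rabs_Zabs. apply IZR_le. apply absw. }
    apply lt_IZR in Hlt. lia. }
  unfold L.
  destruct (epsilon_spec (inhabits 0%nat) (fun n => lattice_card d (translate d P w) s n))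
    as [l' [Hlen [_ Hin]]].
  { exists (length l). exists l. auto. }
  rewrite <- Hlen. destruct l' as [|a l'']; [|discriminate].
  destruct (proj2 (Hin z)) as []; auto.
Qed.

Lemma L_zero (d : nat) (P : (nat -> R) -> Prop) (s : R) :
  (forall z, length z = d -> ~ dilate d s P (vecZ z)) -> L d P s = 0%nat.
Proof.
  intros H. unfold L.
  destruct (epsilon_spec (inhabits 0%nat) (fun n => lattice_card d P s n))
    as [l' [Hlen [_ Hin]]].
  { exists 0%nat. exists nil. split; auto. split; [constructor|].
    intro z; simpl; split; [tauto|]. intros [a b]; exact (H z a b). }
  rewrite <- Hlen. destruct l' as [|a l'']; auto.
  destruct (proj1 (Hin a)) as [h1 h2]; [left; auto|]. exfalso; exact (H a h1 h2).
Qed.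
Lemma sumR_ext n f g : (forall k, (k < n)%nat -> f k = g k) -> sumR n f = sumR n g.
Proof. induction n; intros H; simpl; auto. rewrite IHn, H; auto; intros; apply H; lia. Qed.

Lemma sumR_le n f g : (forall k, (k < n)%nat -> f k <= g k) -> sumR n f <= sumR n g.
Proof. induction n; intros H; simpl; [lra|]. apply Rplus_le_compat; [apply IHn; intros; apply H; lia| apply H; lia]. Qed.

Lemma sumR_abs n f : Rabs (sumR n f) <= sumR n (fun k => Rabs (f k)).
Proof. induction n; simpl; [rewrite Rabs_R0; lra|]. eapply Rle_trans; [apply Rabs_triang|]. lra. Qed.

Lemma sumR_scal n f c : sumR n (fun k => f k * c) = sumR n f * c.
Proof. induction n; simpl; [ring|]. rewrite IHn; ring. Qed.

Lemma sumR_nonneg n f : (forall k, 0 <= f k) -> 0 <= sumR n f.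
Proof. induction n; intros H; simpl; [lra|]. specialize (IHn H). specialize (H n). lra. Qed.

Lemma sumR_term n f k : (forall j, 0 <= f j) -> (k < n)%nat -> f k <= sumR n f.
Proof.
  induction n; intros H Hk; [lia|]. simpl.
  destruct (Nat.eq_dec k n) as [->|Hne].
  - pose proof (sumR_nonneg n f H). lra.
  - assert (f k <= sumR n f) by (apply IHn; auto; lia). specialize (H n). lra.
Qed.

Lemma dotZ_comb d a x y al be :
  dotZ d a (fun k => al * x k + be * y k) = al * dotZ d a x + be * dotZ d a y.
Proof. unfold dotZ; induction d; simpl; [ring|]. rewrite IHd; ring. Qed.

Lemma dotZ_cont d a x y r : (forall k, (k < d)%nat -> Rabs (y k - x k) <= r) ->
  Rabs (dotZ d a y - dotZ d a x) <= sumR d (fun k => Rabs (IZR (a k))) * r.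
Proof.
  intros H.
  assert (E : dotZ d a y - dotZ d a x = sumR d (fun k => IZR (a k) * (y k - x k))).
  { unfold dotZ. clear H. induction d; simpl; [ring|]. rewrite <- IHd; ring. }
  rewrite E. eapply Rle_trans; [apply sumR_abs|]. rewrite <- sumR_scal.
  apply sumR_le. intros k Hk. rewrite Rabs_mult.
  apply Rmult_le_compat_l; [apply Rabs_pos| auto].
Qed.

Definition Hdesc d (Q : (nat -> R) -> Prop) := exists (n : nat) (a : nat -> nat -> Z) (b : nat -> R),
      forall x, Q x <-> (forall i, (i < n)%nat -> dotZ d (a i) x <= b i).

Lemma closed_compl d Q x : Hdesc d Q -> ~ Q x ->
  exists r, 0 < r /\ forall y, (forall k, (k < d)%nat -> Rabs (y k - x k) < r) -> ~ Q y.
Proof.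
  intros [n [a [b H]]] nQ.
  rewrite H in nQ. apply not_all_ex_not in nQ. destruct nQ as [i Hi].
  apply imply_to_and in Hi. destruct Hi as [Hi Hg]. apply Rnot_le_gt in Hg.
  set (g := dotZ d (a i) x - b i).
  set (C := sumR d (fun k => Rabs (IZR (a i k)))).
  assert (C0 : 0 <= C) by (apply sumR_nonneg; intros; apply Rabs_pos).
  exists (g / (C + 1)). split.
  { unfold g. apply Rdiv_lt_0_compat; lra. }
  intros y Hy Qy. rewrite H in Qy. specialize (Qy i Hi).
  assert (Hc := dotZ_cont d (a i) x y (g / (C+1)) ltac:(intros k Hk; left; apply Hy; auto)).
  fold C in Hc.
  assert (E : C * (g / (C + 1)) = g - g / (C+1)) by (field; lra).
  assert (0 < g / (C+1)) by (unfold g; apply Rdiv_lt_0_compat; lra).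
  pose proof (Rle_abs (dotZ d (a i) x - dotZ d (a i) y)).
  rewrite Rabs_minus_sym in Hc. unfold g in *. lra.
Qed.
Lemma interior_out d (P Q : (nat -> R) -> Prop) x rQ :
  Hdesc d P -> full_dimensional d P -> P x -> 0 < rQ ->
  (forall y, (forall k, (k < d)%nat -> Rabs (y k - x k) < rQ) -> ~ Q y) ->
  exists x' r, 0 < r /\
    (forall y, (forall k, (k < d)%nat -> Rabs (y k - x' k) < r) -> P y) /\
    (forall y, (forall k, (k < d)%nat -> Rabs (y k - x' k) < r) -> ~ Q y).
Proof.
  intros [n [a [b HP]]] [c [rho [rhopos Hc]]] Px rQpos HQ.
  set (Cd := sumR d (fun k => Rabs (c k - x k))).
  assert (Cd0 : 0 <= Cd) by (apply sumR_nonneg; intros; apply Rabs_pos).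
  set (t := rQ / 2 / (Cd + 1)).
  assert (tpos : 0 < t) by (unfold t; apply Rdiv_lt_0_compat; lra).
  assert (tE : t * Cd = rQ / 2 - t) by (unfold t; field; lra).
  set (lam := Rmin (1/2) t).
  assert (lpos : 0 < lam) by (unfold lam; apply Rmin_glb_lt; lra).
  assert (lle : lam <= 1/2) by apply Rmin_l.
  assert (llt : lam <= t) by apply Rmin_r.
  assert (Hclose : forall k, (k < d)%nat -> Rabs (lam * (c k - x k)) < rQ / 2).
  { intros k Hk. rewrite Rabs_mult, (Rabs_pos_eq lam) by lra.
    assert (Rabs (c k - x k) <= Cd) by (apply (sumR_term d (fun k => Rabs (c k - x k))); auto; intros; apply Rabs_pos).
    assert (lam * Rabs (c k - x k) <= t * Cd).
    { apply Rmult_le_compat; auto; try lra; apply Rabs_pos. }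
    lra. }
  exists (fun k => (1 - lam) * x k + lam * c k), (Rmin (lam * rho) (rQ / 2)).
  assert (r1 : Rmin (lam * rho) (rQ / 2) <= lam * rho) by apply Rmin_l.
  assert (r2 : Rmin (lam * rho) (rQ / 2) <= rQ / 2) by apply Rmin_r.
  split; [apply Rmin_glb_lt; [apply Rmult_lt_0_compat|]; lra|]. split.
  - intros y Hy. apply HP. intros i Hi.
    set (c' := fun k => (y k - (1 - lam) * x k) / lam).
    assert (Pc' : P c').
    { apply Hc. intros k Hk. specialize (Hy k Hk).
      replace (c' k - c k) with ((y k - ((1 - lam) * x k + lam * c k)) / lam)
        by (unfold c'; field; lra).
      unfold Rdiv. rewrite Rabs_mult, Rabs_inv, (Rabs_pos_eq lam) by lra.
      apply (Rmult_lt_reg_r lam); auto. rewrite Rmult_assoc, Rinv_l by lra. lra. }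
    assert (E : dotZ d (a i) y = dotZ d (a i) (fun k => (1 - lam) * x k + lam * c' k)).
    { unfold dotZ. apply sumR_ext. intros k _. f_equal. unfold c'. field. lra. }
    rewrite E, dotZ_comb.
    pose proof (proj1 (HP x) Px i Hi). pose proof (proj1 (HP c') Pc' i Hi).
    assert ((1 - lam) * dotZ d (a i) x <= (1 - lam) * b i) by (apply Rmult_le_compat_l; lra).
    assert (lam * dotZ d (a i) c' <= lam * b i) by (apply Rmult_le_compat_l; lra).
    lra.
  - intros y Hy. apply HQ. intros k Hk. specialize (Hy k Hk). specialize (Hclose k Hk).
    replace (y k - x k) with ((y k - ((1 - lam) * x k + lam * c k)) + lam * (c k - x k)) by ring.
    eapply Rle_lt_trans; [apply Rabs_triang|]. lra.
Qed.
Lemma nth_map_seq (f : nat -> Z) d k : (k < d)%nat -> nth k (map f (seq 0 d)) 0%Z = f k.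
Proof.
  intros Hk. rewrite nth_indep with (d' := f 0%nat) by (rewrite length_map, length_seq; auto).
  rewrite map_nth, seq_nth; auto.
Qed.

Lemma half (d : nat) (P Q : (nat -> R) -> Prop) (D : R -> Prop)
  (hP : semi_rational_polytope d P) (hPf : full_dimensional d P)
  (hQ : semi_rational_polytope d Q)
  (hDpos : forall s, D s -> 0 < s)
  (hDdense : forall a b, 0 <= a -> a < b -> exists s, D s /\ a < s /\ s < b)
  (hL : forall (w : list Z) (s : R), length w = d -> D s ->
          L d (translate d P w) s = L d (translate d Q w) s) :
  forall x : nat -> R, P x -> Q x.
Proof.
  intros x Px. apply NNPP; intro nQx.
  destruct (closed_compl d Q x (proj1 hQ) nQx) as [rQ [rQpos HrQ]].
  destruct (interior_out d P Q x rQ (proj1 hP) hPf Px rQpos HrQ) as [x' [r [rpos [HPb HQb]]]].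
  destruct (proj2 hP) as [MP HMP]. destruct (proj2 hQ) as [MQ HMQ].
  assert (Px' : P x') by (apply HPb; intros; unfold Rminus; rewrite Rplus_opp_r, Rabs_R0; auto).
  destruct (INR_unbounded (Rabs MP + Rabs MQ + r + 1)) as [n Hn].
  pose proof (Rabs_pos MP). pose proof (Rabs_pos MQ).
  pose proof (Rle_abs MP). pose proof (Rle_abs MQ).
  assert (n0 : 0 < INR n) by lra.
  destruct (hDdense (/ (INR n + r)) (/ INR n)) as [s [Ds [Hs1 Hs2]]].
  { left; apply Rinv_0_lt_compat; lra. }
  { apply Rinv_lt_contravar; [apply Rmult_lt_0_compat|]; lra. }
  pose proof (hDpos s Ds) as spos.
  assert (Hsn : INR n < / s).
  { apply (Rmult_lt_reg_l s); auto. rewrite Rinv_r by lra.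
    apply (Rmult_lt_reg_r (/ INR n)); [apply Rinv_0_lt_compat; lra|].
    replace (s * INR n * / INR n) with s by (field; lra). lra. }
  assert (Hsr : / s < INR n + r).
  { apply (Rmult_lt_reg_l s); auto. rewrite Rinv_r by lra.
    apply (Rmult_lt_reg_r (/ (INR n + r))); [apply Rinv_0_lt_compat; lra|].
    replace (s * (INR n + r) * / (INR n + r)) with s by (field; lra). lra. }
  set (del := / s - INR n).
  assert (dpos : 0 < del) by (unfold del; lra).
  assert (dlt : del < r) by (unfold del; lra).
  set (zf := fun k => (up (x' k / del) - 1)%Z).
  assert (Happ : forall k, Rabs (IZR (zf k) * del - x' k) < r).
  { intro k. unfold zf. rewrite minus_IZR.
    destruct (archimed (x' k / del)) as [h1 h2].
    set (u := IZR (up (x' k / del))) in *.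
    assert (E : x' k = x' k / del * del) by (field; lra).
    assert ((u - 1) * del <= x' k).
    { rewrite E at 1. apply Rmult_le_compat_r; lra. }
    assert (x' k - del < (u - 1) * del).
    { rewrite E at 1. replace ((u-1)*del) with (u * del - del) by ring.
      assert (x' k / del * del < u * del) by (apply Rmult_lt_compat_r; lra). lra. }
    apply Rabs_def1; lra. }
  set (z := map zf (seq 0 d)).
  set (w := map (fun k => (zf k * Z.of_nat n)%Z) (seq 0 d)).
  assert (Hzk : forall k, (k < d)%nat -> vecZ z k = IZR (zf k)).
  { intros k Hk. unfold vecZ, z. rewrite nth_map_seq; auto. }
  assert (Hwk : forall k, (k < d)%nat -> vecZ w k = IZR (zf k) * INR n).
  { intros k Hk. unfold vecZ, w. rewrite (nth_map_seq (fun k => (zf k * Z.of_nat n)%Z)); auto.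
    rewrite mult_IZR, <- INR_IZR_INZ. auto. }
  assert (Hlw : length w = d) by (unfold w; rewrite length_map, length_seq; auto).
  assert (Hlz : length z = d) by (unfold z; rewrite length_map, length_seq; auto).
  pose proof (hL w s Hlw Ds) as HLeq.
  assert (HQ0 : L d (translate d Q w) s = 0%nat).
  { apply L_zero. intros z' Hz' [y [[q [Qq Hq]] Hy]].
    assert (Hqk : forall k, (k < d)%nat -> q k = IZR (nth k z' 0%Z) / s - IZR (zf k) * INR n).
    { intros k Hk. rewrite <- Hwk by auto. specialize (Hy k Hk). specialize (Hq k Hk).
      unfold vecZ in Hy at 1. rewrite Hq in Hy. rewrite Hy. field. lra. }
    destruct (classic (forall k, (k < d)%nat -> nth k z' 0%Z = zf k)) as [Hall|Hnot].
    - apply (HQb q); auto. intros k Hk. rewrite Hqk, Hall by auto.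
      replace (IZR (zf k) / s - IZR (zf k) * INR n) with (IZR (zf k) * del) by (unfold del; field; lra).
      apply Happ.
    - apply not_all_ex_not in Hnot. destruct Hnot as [k Hk].
      apply imply_to_and in Hk. destruct Hk as [Hk Hne].
      set (u := IZR (nth k z' 0%Z) - IZR (zf k)).
      assert (Hu : 1 <= Rabs u).
      { unfold u. rewrite <- minus_IZR, Rabs_Zabs. apply IZR_le. lia. }
      assert (E : q k = IZR (zf k) * del + u * / s) by (rewrite Hqk by auto; unfold u, del; field; lra).
      assert (Hus : Rabs (u * / s) = Rabs u * / s).
      { rewrite Rabs_mult, (Rabs_pos_eq (/ s)); auto. left; apply Rinv_0_lt_compat; auto. }
      assert (/ s <= Rabs u * / s).
      { rewrite <- (Rmult_1_l (/ s)) at 1. apply Rmult_le_compat_r; auto.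
        left; apply Rinv_0_lt_compat; auto. }
      assert (G1 : Rabs (u * / s) <= Rabs (q k) + Rabs (IZR (zf k) * del)).
      { replace (u * / s) with (q k + - (IZR (zf k) * del)) by lra.
        eapply Rle_trans; [apply Rabs_triang|]. rewrite Rabs_Ropp. lra. }
      assert (G2 : Rabs (IZR (zf k) * del) <= Rabs (x' k) + r).
      { replace (IZR (zf k) * del) with ((IZR (zf k) * del - x' k) + x' k) by ring.
        eapply Rle_trans; [apply Rabs_triang|]. specialize (Happ k). lra. }
      specialize (HMQ q Qq k Hk). specialize (HMP x' Px' k Hk). lra. }
  apply (L_pos d P s w z (proj2 hP) spos Hlz); [|lia].
  exists (fun k => IZR (nth k z 0%Z) / s). split.
  - exists (fun k => IZR (nth k z 0%Z) / s - vecZ w k). split.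
    + apply HPb. intros k Hk. change (IZR (nth k z 0%Z)) with (vecZ z k).
      rewrite Hzk, Hwk by auto.
      replace (IZR (zf k) / s - IZR (zf k) * INR n) with (IZR (zf k) * del) by (unfold del; field; lra).
      apply Happ.
    + intros k Hk. ring.
  - intros k Hk. unfold vecZ. field. lra.
Qed.

Theorem corollary4p4 (d : nat) (P Q : (nat -> R) -> Prop) (D : R -> Prop)
  (hP : semi_rational_polytope d P) (hPf : full_dimensional d P)
  (hQ : semi_rational_polytope d Q) (hQf : full_dimensional d Q)
  (hDpos : forall s, D s -> 0 < s)
  (hDdense : forall a b, 0 <= a -> a < b -> exists s, D s /\ a < s /\ s < b)
  (hL : forall (w : list Z) (s : R), length w = d -> D s ->
          L d (translate d P w) s = L d (translate d Q w) s) :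
  forall x : nat -> R, P x <-> Q x.
Proof.
  intros x; split.
  - apply (half d P Q D hP hPf hQ hDpos hDdense hL).
  - apply (half d Q P D hQ hQf hP hDpos hDdense). intros w s Hw Ds. symmetry. auto.
Qed.
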